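(* Let $\bm\Sigma=I_p$, $\sigma>0$, $n,\tilde n\ge1$, $1\le s\le p$, $b_0\ne0$, and let $\bm b\in\mathbb{R}^p$ satisfy $b_k\in\{-b_0,0,b_0\}$ for all $k$ and $\|\bm b\|_0=s$. Fix $1\le j\le p$ with $b_j\neq0$. Define $$\eta_j^{(os)}=\frac{\sqrt n b_j}{\Omega_{j,j}^{1/2}\sigma},\qquad \eta_j^{(ts)}=\frac{\sqrt n b_j}{\sqrt{(\Omega_{j,j}\bm b^{\intercal}\bm\Sigma\bm b+b_j^2)(1+n/\tilde n)+\Omega_{j,j}\sigma^2}},$$ with $\bm\Omega=\bm\Sigma^{-1}$. Then $|\eta_j^{(os)}|=\sqrt n|b_0|/\sigma$ and $$|\eta_j^{(ts)}|\le\min\Big\{\sqrt{\frac{n\wedge\tilde n}{s}},\ \frac{\sqrt n|b_0|}{\sigma}\Big\}.$$ Consequently the one-sample and two-sample powers $\Phi(|\eta|-\tau_\alpha)+\Phi(-|\eta|-\tau_\alpha)$ (with $\eta=\eta_j^{(os)}$, resp. $\eta_j^{(ts)}$) are given by these values.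
   Context: $\Phi$ is the standard normal CDF, $\tau_\alpha$ the $\alpha$-quantile of the standard normal, $a\wedge b=\min\{a,b\}$. The quantities $\eta_j^{(os)},\eta_j^{(ts)}$ are the signal strengths (means of the asymptotic $\sqrt n$-scaled $z$-statistics) for testing $\beta_j=0$ with one-sample data and with proxy data, respectively, when the true coefficient is $\bm b$. *)

(* Defs.v *)
From HB Require Import structures.
From mathcomp Require Import all_boot all_order all_algebra.
Set Implicit Arguments. Unset Strict Implicit. Unset Printing Implicit Defensive.
Import Order.TTheory GRing.Theory Num.Theory.
Local Open Scope ring_scope.

Definition l0norm (R : ringType) (p : nat) (b : 'cV[R]_p) : nat :=
  #|[set k : 'I_p | b k 0 != 0]|.

Definition eta_os (R : rcfType) (p : nat) (n : nat) (sigma : R)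
    (Sigma : 'M[R]_p) (b : 'cV[R]_p) (j : 'I_p) : R :=
  let Omega := invmx Sigma in
  Num.sqrt (n%:R) * b j 0 / (Num.sqrt (Omega j j) * sigma).

Definition eta_ts (R : rcfType) (p : nat) (n nt : nat) (sigma : R)
    (Sigma : 'M[R]_p) (b : 'cV[R]_p) (j : 'I_p) : R :=
  let Omega := invmx Sigma in
  Num.sqrt (n%:R) * b j 0 /
  Num.sqrt ((Omega j j * (b^T *m Sigma *m b) 0 0 + b j 0 ^+ 2)
              * (1 + n%:R / nt%:R) + Omega j j * sigma ^+ 2).

(* Main.v *)
Require Import Defs.
From HB Require Import structures.
From mathcomp Require Import all_boot all_order all_algebra.
From mathcomp Require Import ring lra.
Import Order.TTheory GRing.Theory Num.Theory.
Local Open Scope ring_scope.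

Theorem corollary1 (R : rcfType) (p n nt s : nat) (sigma b0 : R)
    (b : 'cV[R]_p) (j : 'I_p) :
  0 < sigma -> (1 <= n)%N -> (1 <= nt)%N -> (1 <= s <= p)%N -> b0 != 0 ->
  (forall k : 'I_p, b k 0 \in [:: - b0; 0; b0]) ->
  l0norm b = s ->
  b j 0 != 0 ->
  `| eta_os n sigma 1%:M b j | = Num.sqrt (n%:R) * `|b0| / sigma /\
  `| eta_ts n nt sigma 1%:M b j |
    <= Num.min (Num.sqrt ((minn n nt)%:R / s%:R)) (Num.sqrt (n%:R) * `|b0| / sigma).
Proof.
move=> sg0 n1 nt1 /andP[s1 sp] b00 bk l0 bj0.
have bjE : b j 0 ^+ 2 = b0 ^+ 2.
  move: (bk j) bj0; rewrite !inE => /orP[/eqP->|/orP[/eqP->|/eqP->]] //.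
    by rewrite sqrrN.
  by rewrite eqxx.
have nbj : `|b j 0| = `|b0| by rewrite -!sqrtr_sqr bjE.
have sumE : (b^T *m 1%:M *m b) 0 0 = s%:R * b0 ^+ 2.
  rewrite mulmx1 mxE.
  rewrite (bigID (fun k => b k 0 != 0)) /= [X in _ + X]big1; last first.
    by move=> k; rewrite negbK => /eqP ->; rewrite mulr0.
  rewrite addr0 (eq_bigr (fun _ => b0 ^+ 2)); last first.
    move=> k bk0; rewrite mxE -expr2.
    move: (bk k) bk0; rewrite !inE => /orP[/eqP->|/orP[/eqP->|/eqP->]] //.
      by rewrite sqrrN.
    by rewrite eqxx.
  rewrite sumr_const -l0 /l0norm cardsE.
  by rewrite mulr_natl.
rewrite /eta_os /eta_ts invmx1 sumE mxE eqxx mulr1n sqrtr1 mul1r !mul1r.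
set N := n%:R; set T := nt%:R; set S := s%:R; set B := b0 ^+ 2.
have N0 : 0 < N by rewrite ltr0n.
have T0 : 0 < T by rewrite ltr0n.
have S0 : 0 < S by rewrite ltr0n.
have B0 : 0 < B by rewrite exprn_even_gt0.
have sN : 0 < Num.sqrt N by rewrite sqrtr_gt0.
split.
  by rewrite !normrM normfV nbj (ger0_norm (ltW sN)) (ger0_norm (ltW sg0)).
rewrite bjE -/B.
set D := _ + _.
have u0 : 0 <= N / T by rewrite divr_ge0 // ltW.
have D0 : sigma ^+ 2 <= D.
  rewrite /D lerDr; apply: mulr_ge0; last by lra.
  by apply: addr_ge0; [apply: mulr_ge0|]; apply: ltW.
have Dp : 0 < D by apply: lt_le_trans D0; rewrite exprn_gt0.
have sD : 0 < Num.sqrt D by rewrite sqrtr_gt0.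
rewrite !normrM normfV nbj (ger0_norm (ltW sN)) (ger0_norm (ltW sD)).
rewrite le_min; apply/andP; split.
  rewrite -ler_sqr; [| by rewrite nnegrE divr_ge0 ?mulr_ge0 ?sqrtr_ge0 | by rewrite nnegrE sqrtr_ge0].
  rewrite sqr_sqrtr; [| by rewrite divr_ge0 ?ler0n ?ltW].
  rewrite expr_div_n exprMn (sqr_sqrtr (ltW N0)) (sqr_sqrtr (ltW Dp)) real_normK ?num_real //.
  rewrite ler_pdivrMr ?exprn_gt0 // mulrAC ler_pdivlMr // /D.
  have hB : 0 <= B by rewrite ltW.
  have hSB : 0 <= S * B by rewrite mulr_ge0 ?ltW.
  have hs2 : 0 <= sigma ^+ 2 by rewrite sqr_ge0.
  have hBu : 0 <= B * (N / T) by rewrite mulr_ge0.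
  have hSBu : 0 <= S * B * (N / T) by rewrite mulr_ge0.
  case: (leqP n nt) => hn; rewrite -/N -/B -/T.
    rewrite -mulrA ler_pM2l //.
    have -> : B * S = S * B by rewrite mulrC.
    nra.
  have NE : N * B * S = T * ((N / T) * (S * B)).
    by field; rewrite gt_eqF.
  rewrite NE ler_pM2l //.
  nra.
rewrite ler_pdivrMr // mulrAC ler_pdivlMr // ler_pM2l ?mulr_gt0 ?normr_gt0 //.
by rewrite -(ger0_norm (ltW sg0)) -sqrtr_sqr ler_sqrt // ltW.
Qed.
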